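(* Let $N\ge1$, $K>0$, $r_i>0$, let $(\mu_{ij})$ be a nonnegative, symmetric, irreducible $N\times N$ matrix, and let $\Psi_1,\dots,\Psi_N:\mathbb{R}^N\to\mathbb{R}$ be locally Lipschitz, with $\Psi_i(0)=0$, monotone increasing for the componentwise order, and such that for each $i$ there exist positive $R_i,k_i,c_i$ with $c_i(\sum_jv_j)^{k_i}\le\Psi_i(v)$ for all $v\in[0,\infty)^N$ with $\sum_j|v_j|\ge R_i$. Let $v$ be a positive solution and $\bar v$ a positive stationary solution of $$\frac{dv_i}{dt}=v_i\left[r_i-\frac{1}{K}\Psi_i(v)\right]+\sum_{j=1}^N\mu_{ij}(v_j-v_i),\qquad i=1,\dots,N.$$ Then (i) $\displaystyle\frac{d}{dt}\left(\sum_{i=1}^Nv_i\bar v_i\right)=\frac1K\sum_{i=1}^N(\Psi_i(\bar v)-\Psi_i(v))v_i\bar v_i$; (ii) $\displaystyle\frac{d}{dt}\left(\sum_{i=1}^Nv_i^2\right)=-\sum_{i,j=1}^N\mu_{ij}\bar v_i\bar v_j\left(\frac{v_i}{\bar v_i}-\frac{v_j}{\bar v_j}\right)^2+\frac2K\sum_{i=1}^Nv_i^2\left(\Psi_i(\bar v)-\Psi_i(v)\right)$.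
   Context: Positive means all components strictly positive; a stationary solution is a vector at which the right-hand side vanishes for every $i$. *)

(* Defs.v *)
From HB Require Import structures.
From mathcomp Require Import all_boot all_order all_algebra.
From mathcomp Require Import all_classical all_reals all_analysis.
Set Implicit Arguments. Unset Strict Implicit. Unset Printing Implicit Defensive.
Import Order.TTheory GRing.Theory Num.Theory.
Import numFieldNormedType.Exports.
Local Open Scope ring_scope.

(* f is locally Lipschitz on R^N (max norm on row vectors; all norms equivalent). *)
Definition locally_lipschitz (R : realType) (N : nat) (f : 'rV[R]_N -> R) : Prop :=
  forall x : 'rV[R]_N, exists2 d : R, 0 < d &
    exists L : R, forall y z : 'rV[R]_N,
      `|y - x| < d -> `|z - x| < d -> `|f y - f z| <= L * `|y - z|.

Definition monotone_cw (R : realType) (N : nat) (f : 'rV[R]_N -> R) : Prop :=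
  forall u w : 'rV[R]_N, (forall j, u ord0 j <= w ord0 j) -> f u <= f w.

Definition growth_cond (R : realType) (N : nat) (f : 'rV[R]_N -> R) : Prop :=
  exists R0 k c : R, [/\ 0 < R0, 0 < k, 0 < c &
    forall v : 'rV[R]_N, (forall j, 0 <= v ord0 j) ->
      R0 <= \sum_j `|v ord0 j| ->
      c * powR (\sum_j v ord0 j) k <= f v].

Definition irreducible_mx (R : realType) (N : nat) (mu : 'M[R]_N) : Prop :=
  forall S : {set 'I_N}, S != finset.set0 -> S != [set: 'I_N]%SET ->
    exists i, exists j, [/\ i \in S, j \notin S & mu i j != 0].

Definition rhs (R : realType) (N : nat) (K : R) (r : 'I_N -> R) (mu : 'M[R]_N)
  (Psi : 'I_N -> 'rV[R]_N -> R) (v : 'rV[R]_N) (i : 'I_N) : R :=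
  v ord0 i * (r i - K^-1 * Psi i v) + \sum_j mu i j * (v ord0 j - v ord0 i).

(* Main.v *)
Require Import Defs.
From HB Require Import structures.
From mathcomp Require Import all_boot all_order all_algebra.
From mathcomp Require Import all_classical all_reals all_analysis.
From mathcomp Require Import ring.
Import Order.TTheory GRing.Theory Num.Theory.
Import numFieldNormedType.Exports.
Local Open Scope ring_scope.

Theorem lemma3p2 (R : realType) (N : nat) (K : R) (r : 'I_N -> R)
  (mu : 'M[R]_N) (Psi : 'I_N -> 'rV[R]_N -> R)
  (D : set R) (v : R -> 'rV[R]_N) (vbar : 'rV[R]_N) :
  (0 < N)%N -> 0 < K -> (forall i, 0 < r i) ->
  (forall i j, 0 <= mu i j) -> mu^T = mu -> irreducible_mx mu ->
  (forall i, locally_lipschitz (Psi i)) ->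
  (forall i, Psi i 0 = 0) ->
  (forall i, monotone_cw (Psi i)) ->
  (forall i, growth_cond (Psi i)) ->
  (* v is a positive solution on the time set D *)
  (forall t, D t -> forall i, 0 < v t ord0 i) ->
  (forall t, D t -> forall i,
     is_derive t 1 (fun s => v s ord0 i) (rhs K r mu Psi (v t) i)) ->
  (* vbar is a positive stationary solution *)
  (forall i, 0 < vbar ord0 i) ->
  (forall i, rhs K r mu Psi vbar i = 0) ->
  forall t, D t ->
    is_derive t 1 (fun s => \sum_i v s ord0 i * vbar ord0 i)
      (K^-1 * \sum_i (Psi i vbar - Psi i (v t)) * v t ord0 i * vbar ord0 i)
 /\ is_derive t 1 (fun s => \sum_i v s ord0 i ^+ 2)
      (- \sum_i \sum_j mu i j * vbar ord0 i * vbar ord0 j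
            * (v t ord0 i / vbar ord0 i - v t ord0 j / vbar ord0 j) ^+ 2
       + 2 / K * \sum_i v t ord0 i ^+ 2 * (Psi i vbar - Psi i (v t))).
Proof.
move=> _ Kpos _ _ Hsym _ _ _ _ _ _ Hder vpos Hstat t Dt.
have sym : forall i j, mu i j = mu j i.
  by move=> i j; rewrite -{1}Hsym mxE.
have vb0 : forall i, vbar ord0 i != 0 by move=> i; rewrite gt_eqF.
have K0 : K != 0 by rewrite gt_eqF.
set w := v t.
have D1 : is_derive t 1 (fun s => \sum_i v s ord0 i * vbar ord0 i)
   (\sum_i vbar ord0 i * rhs K r mu Psi w i).
  have -> : (fun s => \sum_i v s ord0 i * vbar ord0 i)
      = \sum_i (fun s => v s ord0 i * vbar ord0 i).
    by rewrite fct_sumE.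
  apply: is_derive_sum => i.
  have -> : (fun s => v s ord0 i * vbar ord0 i)
     = (fun s => vbar ord0 i *: v s ord0 i).
    by apply/funext => s; rewrite mulrC.
  exact: (is_deriveZ _ (Hder t Dt i)).
have D2 : is_derive t 1 (fun s => \sum_i v s ord0 i ^+ 2)
   (\sum_i 2 * w ord0 i * rhs K r mu Psi w i).
  have -> : (fun s => \sum_i v s ord0 i ^+ 2)
      = \sum_i ((fun s => v s ord0 i) ^+ 2).
    rewrite fct_sumE; apply/funext => s; apply: eq_bigr => i _.
    by rewrite /= !exprS expr0 /=.
  apply: is_derive_sum => i.
  apply: is_derive_eq; first exact: (is_deriveX 2 (Hder t Dt i)).
  by rewrite /= expr1 /w; rewrite /GRing.scale /=; ring.
have P1 : forall i, vbar ord0 i * rhs K r mu Psi w i =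
   K^-1 * ((Psi i vbar - Psi i w) * w ord0 i * vbar ord0 i)
   + \sum_j (mu i j * (vbar ord0 i * w ord0 j) - mu j i * (vbar ord0 j * w ord0 i)).
  move=> i.
  have := Hstat i; rewrite /rhs => Hs.
  rewrite /rhs.
  set S1 := \sum_j _.
  set S2 := \sum_j _ in Hs.
  have E1 : vbar ord0 i * S1 = \sum_j (mu i j * (vbar ord0 i * w ord0 j) - mu j i * (vbar ord0 j * w ord0 i)) + w ord0 i * S2.
    rewrite /S1 /S2 !mulr_sumr -big_split; apply: eq_bigr => j _ /=.
    rewrite (sym j i); ring.
  rewrite mulrDr E1.
  have -> : S2 = - (vbar ord0 i * (r i - K^-1 * Psi i vbar)).
    by apply/eqP; rewrite -addr_eq0 addrC Hs.
  ring.
have P2 : forall i, 2 * w ord0 i * rhs K r mu Psi w i =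
   2 / K * (w ord0 i ^+ 2 * (Psi i vbar - Psi i w))
   - \sum_j (mu i j * (w ord0 i ^+ 2 * vbar ord0 j / vbar ord0 i)
       - 2 * (mu i j * (w ord0 i * w ord0 j))
       + mu j i * (w ord0 j ^+ 2 * vbar ord0 i / vbar ord0 j))
   + \sum_j (mu j i * (w ord0 j ^+ 2 * vbar ord0 i / vbar ord0 j)
       - mu i j * (w ord0 i ^+ 2 * vbar ord0 j / vbar ord0 i)).
  move=> i.
  have := Hstat i; rewrite /rhs => Hs.
  rewrite /rhs.
  set S1 := \sum_j _.
  set S2 := \sum_j _ in Hs.
  set T1 := \sum_j _.
  set T2 := \sum_j _.
  have -> : T1 = T2 - 2 * (w ord0 i * S1) + 2 * (w ord0 i ^+ 2 / vbar ord0 i * S2).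
    rewrite /T1 /T2 /S1 /S2 !mulr_sumr -!sumrB -big_split /=; apply: eq_bigr => j _ /=.
    by field; rewrite !vb0.
  have -> : S2 = - (vbar ord0 i * (r i - K^-1 * Psi i vbar)).
    by apply/eqP; rewrite -addr_eq0 addrC Hs.
  by field; rewrite vb0 K0.
split.
  apply: (is_derive_eq D1).
  rewrite (eq_bigr _ (fun i _ => P1 i)) big_split /= -mulr_sumr.
  rewrite [X in _ + X](_ : _ = 0) ?addr0 //.
  under eq_bigr do rewrite sumrB.
  by rewrite sumrB exchange_big subrr.
apply: (is_derive_eq D2).
rewrite (eq_bigr _ (fun i _ => P2 i)) big_split /= sumrB -mulr_sumr.
rewrite [X in _ + X](_ : _ = 0) ?addr0; last first.
  under eq_bigr do rewrite sumrB.
  by rewrite sumrB exchange_big subrr.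
rewrite addrC; congr (_ + _); congr (- _).
apply: eq_bigr => i _; apply: eq_bigr => j _.
rewrite (sym j i); field; by rewrite !vb0.
Qed.
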